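(* Assume the Lipschitz gradient assumption, $r_1>L_x$, $r_2>L_y$, and let $\{(x^t,y^t,z^t,v^t)\}$ be generated by DS-GDA with $c,\alpha>0$, $\beta,\mu\in(0,1)$. Then for every $t\ge0$, $$d(y^{t+1},z^{t+1},v^{t+1})\ge d(y^t,z^t,v^t)+\frac{(2-\mu)r_2}{2\mu}\|v^{t+1}-v^t\|^2+\frac{r_1}{2}\langle z^{t+1}+z^t-2x(y^{t+1},z^{t+1},v^t),z^{t+1}-z^t\rangle+\langle\nabla_yF(x(y^t,z^t,v^t),y^t,z^t,v^t),y^{t+1}-y^t\rangle-\frac{L_d}{2}\|y^{t+1}-y^t\|^2,$$ where $L_d=L_y\sigma_1+L_y+r_2$, $\sigma_1=\frac{L_y+r_1-L_x}{r_1-L_x}$.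
   Context: Let $\mathcal X\subset\mathbb R^n$, $\mathcal Y\subset\mathbb R^d$ be nonempty convex compact sets and $f:\mathbb R^n\times\mathbb R^d\to\mathbb R$ continuously differentiable. Lipschitz gradient assumption: there are $L_x,L_y>0$ such that for all $x,x'\in\mathcal X$, $y,y'\in\mathcal Y$, $\|\nabla_x f(x,y)-\nabla_x f(x',y')\|\le L_x(\|x-x'\|+\|y-y'\|)$ and $\|\nabla_y f(x,y)-\nabla_y f(x',y')\|\le L_y(\|x-x'\|+\|y-y'\|)$. $F(x,y,z,v)=f(x,y)+\frac{r_1}{2}\|x-z\|^2-\frac{r_2}{2}\|y-v\|^2$; $d(y,z,v)=\min_{x\in\mathcal X}F(x,y,z,v)$ with unique minimizer $x(y,z,v)$. DS-GDA: given $x^0,y^0,z^0,v^0$, for $t\ge0$: $x^{t+1}=\mathrm{proj}_{\mathcal X}(x^t-c\nabla_xF(x^t,y^t,z^t,v^t))$; $y^{t+1}=\mathrm{proj}_{\mathcal Y}(y^t+\alpha\nabla_yF(x^{t+1},y^t,z^t,v^t))$; $z^{t+1}=z^t+\beta(x^{t+1}-z^t)$; $v^{t+1}=v^t+\mu(y^{t+1}-v^t)$. *)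

(* Defs.v *)
From HB Require Import structures.
From mathcomp Require Import all_boot all_order all_algebra.
From mathcomp Require Import all_classical all_reals all_analysis.
Set Implicit Arguments. Unset Strict Implicit. Unset Printing Implicit Defensive.
Import Order.TTheory GRing.Theory Num.Theory.
Import numFieldNormedType.Exports.
Local Open Scope classical_set_scope.
Local Open Scope ring_scope.

Section Defs.
Variable R : realType.

Definition dotp (n : nat) (u w : 'rV[R]_n) : R := \sum_(i < n) u ord0 i * w ord0 i.
Definition enorm (n : nat) (u : 'rV[R]_n) : R := Num.sqrt (dotp u u).

Definition is_proj (n : nat) (S : set 'rV[R]_n) (w p : 'rV[R]_n) : Prop :=
  S p /\ forall u, S u -> enorm (p - w) <= enorm (u - w).

Definition C1_with_grads (n d : nat) (f : 'rV[R]_n -> 'rV[R]_d -> R)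
  (gx : 'rV[R]_n -> 'rV[R]_d -> 'rV[R]_n) (gy : 'rV[R]_n -> 'rV[R]_d -> 'rV[R]_d) : Prop :=
  (forall p : 'rV[R]_n * 'rV[R]_d,
     differentiable (fun q : 'rV[R]_n * 'rV[R]_d => f q.1 q.2) p /\
     forall h : 'rV[R]_n * 'rV[R]_d,
       'd (fun q : 'rV[R]_n * 'rV[R]_d => f q.1 q.2) p h
         = dotp (gx p.1 p.2) h.1 + dotp (gy p.1 p.2) h.2) /\
  continuous (fun q : 'rV[R]_n * 'rV[R]_d => gx q.1 q.2) /\
  continuous (fun q : 'rV[R]_n * 'rV[R]_d => gy q.1 q.2).

Definition Ffun (n d : nat) (f : 'rV[R]_n -> 'rV[R]_d -> R) (r1 r2 : R)
  (x : 'rV[R]_n) (y : 'rV[R]_d) (z : 'rV[R]_n) (v : 'rV[R]_d) : R :=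
  f x y + r1 / 2 * enorm (x - z) ^+ 2 - r2 / 2 * enorm (y - v) ^+ 2.

Definition gradxF (n d : nat) (gx : 'rV[R]_n -> 'rV[R]_d -> 'rV[R]_n) (r1 : R)
  (x : 'rV[R]_n) (y : 'rV[R]_d) (z : 'rV[R]_n) (v : 'rV[R]_d) : 'rV[R]_n :=
  gx x y + r1 *: (x - z).
Definition gradyF (n d : nat) (gy : 'rV[R]_n -> 'rV[R]_d -> 'rV[R]_d) (r2 : R)
  (x : 'rV[R]_n) (y : 'rV[R]_d) (z : 'rV[R]_n) (v : 'rV[R]_d) : 'rV[R]_d :=
  gy x y - r2 *: (y - v).

End Defs.

(* Main.v *)
Require Import Defs.
From HB Require Import structures.
From mathcomp Require Import all_boot all_order all_algebra.
From mathcomp Require Import all_classical all_reals all_analysis.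
From mathcomp Require Import ring lra.
Import Order.TTheory GRing.Theory Num.Theory.
Import numFieldNormedType.Exports.
Local Open Scope classical_set_scope.
Local Open Scope ring_scope.
Section dot.
Context {R : realType} {n : nat}.
Implicit Types u w z : 'rV[R]_n.

Lemma dotpC u w : dotp u w = dotp w u.
Proof. by apply: eq_bigr => i _; rewrite mulrC. Qed.
Lemma dotpDl u w z : dotp (u + w) z = dotp u z + dotp w z.
Proof. by rewrite /dotp -big_split; apply: eq_bigr => i _; rewrite mxE mulrDl. Qed.
Lemma dotpDr u w z : dotp z (u + w) = dotp z u + dotp z w.
Proof. by rewrite dotpC dotpDl !(dotpC z). Qed.
Lemma dotpZl a u w : dotp (a *: u) w = a * dotp u w.
Proof. by rewrite /dotp mulr_sumr; apply: eq_bigr => i _; rewrite mxE mulrA. Qed.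
Lemma dotpZr a u w : dotp w (a *: u) = a * dotp w u.
Proof. by rewrite dotpC dotpZl dotpC. Qed.
Lemma dotpNl u w : dotp (- u) w = - dotp u w.
Proof. by rewrite -scaleN1r dotpZl mulN1r. Qed.
Lemma dotpBl u w z : dotp (u - w) z = dotp u z - dotp w z.
Proof. by rewrite dotpDl dotpNl. Qed.
Lemma dotpBr u w z : dotp z (u - w) = dotp z u - dotp z w.
Proof. by rewrite dotpC dotpBl !(dotpC z). Qed.
Lemma dotp0l u : dotp 0 u = 0.
Proof. by rewrite -(scale0r (0 : 'rV[R]_n)) dotpZl mul0r. Qed.
Lemma dotpp_ge0 u : 0 <= dotp u u.
Proof. by apply: sumr_ge0 => i _; rewrite -expr2 sqr_ge0. Qed.
Lemma enorm_ge0 u : 0 <= enorm u.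
Proof. exact: sqrtr_ge0. Qed.
Lemma enorm_sq u : enorm u ^+ 2 = dotp u u.
Proof. by rewrite /enorm sqr_sqrtr // dotpp_ge0. Qed.
Lemma enormZ a u : enorm (a *: u) = `|a| * enorm u.
Proof. by rewrite /enorm dotpZl dotpZr mulrA sqrtrM ?sqrtr_sqr // -expr2 sqr_ge0. Qed.
Lemma enorm0 : enorm (0 : 'rV[R]_n) = 0.
Proof. by rewrite /enorm dotp0l sqrtr0. Qed.

Lemma dotp_sq_le u w : dotp u w ^+ 2 <= dotp u u * dotp w w.
Proof.
set U := dotp u u; set W := dotp w w; set P := dotp u w.
have Q : forall a, 0 <= U - 2 * a * P + a ^+ 2 * W.
  move=> a; have := dotpp_ge0 (u - a *: w).
  rewrite dotpBl !dotpBr !dotpZl !dotpZr (dotpC w u) -/U -/W -/P.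
  move=> h; lra.
have U0 : 0 <= U := dotpp_ge0 u.
have W0 : 0 <= W := dotpp_ge0 w.
have [W0'|Wpos] := eqVneq W 0.
  have [P0|Pn] := eqVneq P 0; first by rewrite P0 expr2 mulr0 W0' mulr0.
  have := Q ((U + 1) / (2 * P)); rewrite W0' mulr0 addr0.
  have -> : 2 * ((U + 1) / (2 * P)) * P = U + 1.
    by field; rewrite Pn /=; lra.
  lra.
have Wp : 0 < W by rewrite lt_neqAle eq_sym Wpos W0.
have := Q (P / W).
have -> : 2 * (P / W) * P = 2 * (P ^+ 2 / W) by field; rewrite Wpos.
have -> : (P / W) ^+ 2 * W = P ^+ 2 / W by field; rewrite Wpos.
move=> h.
have h2 : P ^+ 2 / W <= U by lra.
by rewrite -(ler_pdivrMr _ _ Wp).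
Qed.

Lemma CS u w : `|dotp u w| <= enorm u * enorm w.
Proof.
rewrite /enorm -sqrtrM ?dotpp_ge0 //.
rewrite -(sqrtr_sqr (dotp u w)).
by rewrite ler_sqrt ?dotp_sq_le // mulr_ge0 ?dotpp_ge0.
Qed.

Lemma dotp_le u w : dotp u w <= enorm u * enorm w.
Proof. exact: le_trans (ler_norm _) (CS u w). Qed.
Lemma dotp_ge u w : - (enorm u * enorm w) <= dotp u w.
Proof. by have := CS u w; rewrite ler_norml => /andP[]. Qed.
End dot.
Lemma descent1 (R : realType) (phi D : R -> R) (K : R) :
  (forall s, derivable phi s 1 /\ 'D_1 phi s = D s) ->
  (forall s, 0 <= s <= 1 -> D s - D 0 <= K * s) ->
  phi 1 - phi 0 - D 0 <= K / 2.
Proof.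
move=> dphi Hb.
pose psi : R -> R := (phi \- (D 0 \*: (@id R))) \- ((K/2) \*: (@id R * @id R)).
have dpsi : forall s : R, is_derive s (1:R) psi (D s - D 0 *: (1:R) - (K/2) *: (s *: (1:R) + s *: (1:R))).
  move=> s; have [d1 d2] := dphi s.
  have h1 : is_derive s (1:R) phi (D s) by rewrite -d2; exact: derivableP.
  apply: is_deriveB; apply: is_deriveZ.
have key : psi 1 <= psi 0.
  apply: (@ler0_derive1_le_cc R psi 0 1).
  - move=> x _; exact: (@ex_derive _ _ _ _ _ _ _ (dpsi x)).
  - move=> x; rewrite in_itv /= => /andP[x0 x1].
    rewrite derive1E derive_val.
    have := Hb x; rewrite (ltW x0) (ltW x1) => /(_ isT).
    rewrite /GRing.scale /= !mulr1; lra.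
  - apply: derivable_within_continuous => x _.
    exact: (@ex_derive _ _ _ _ _ _ _ (dpsi x)).
  - by rewrite in_itv /= lexx ler01.
  - by rewrite in_itv /= lexx ler01.
  - exact: ler01.
move: key; rewrite /psi /= /GRing.scale /= !mulr1 !mulr0.
have -> : (@id R * @id R) 1 = 1 by rewrite /GRing.mul /= mulr1.
have -> : (@id R * @id R) 0 = 0 by rewrite /GRing.mul /= mulr0.
rewrite mulr1 mulr0; lra.
Qed.
Lemma phi_deriv (R : realType) (n d : nat) (F : 'rV[R]_n * 'rV[R]_d -> R)
  (p h : 'rV[R]_n * 'rV[R]_d) :
  (forall q, differentiable F q) ->
  forall s : R, derivable (fun s : R => F (p + s *: h)) s 1 /\
    'D_1 (fun s : R => F (p + s *: h)) s = 'd F (p + s *: h) h.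
Proof.
move=> dF s.
have E : (fun t : R => t^-1 *: (((fun s : R => F (p + s *: h)) \o shift s) (t *: 1) - F (p + s *: h)))
   = (fun t : R => t^-1 *: ((F \o shift (p + s *: h)) (t *: h) - F (p + s *: h))).
  apply/funext => t /=.
  congr (_ *: (F _ - _)).
  by rewrite [t%:A]mulr1 scalerDl addrCA addrA.
split.
  have := @diff_derivable _ _ _ _ _ h (dF (p + s *: h)); rewrite /derivable -E; exact.
have := @deriveE _ _ _ _ _ h (dF (p + s *: h)); rewrite /derive -E; exact.
Qed.
Lemma convex_seg (R : realType) (n : nat) (X : set 'rV[R]_n) (a b : 'rV[R]_n) (s : R) :
  convex_set X -> X a -> X b -> 0 <= s <= 1 -> X (a + s *: (b - a)).
Proof.
move=> cX Xa Xb /andP[s0 s1].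
have := cX b a (Itv01 s0 s1) (mem_set Xb) (mem_set Xa).
rewrite inE.
congr X.
rewrite /conv /= /unstable.onem scalerBl scale1r scalerBr; by rewrite addrC -!addrA (addrC (s *: b)).
Qed.
Lemma descent_abs (R : realType) (phi D : R -> R) (K : R) :
  (forall s, derivable phi s 1 /\ 'D_1 phi s = D s) ->
  (forall s, 0 <= s <= 1 -> `|D s - D 0| <= K * s) ->
  `|phi 1 - phi 0 - D 0| <= K / 2.
Proof.
move=> dphi Hb; rewrite ler_norml; apply/andP; split.
  have := @descent1 R (fun s => - phi s) (fun s => - D s) K.
  have H1 : forall s, derivable (fun s => - phi s) s 1 /\ 'D_1 (fun s => - phi s) s = - D s.
    move=> s; have [d1 d2] := dphi s; split; first exact: (derivableN d1).
    by rewrite (deriveN d1) d2.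
  have H2 : forall s, 0 <= s <= 1 -> - D s - - D 0 <= K * s.
    move=> s hs; have := Hb s hs; rewrite ler_norml => /andP[h _]; lra.
  move=> /(_ H1 H2) H; lra.
apply: descent1 => // s hs; have := Hb s hs; rewrite ler_norml => /andP[_ h]; lra.
Qed.

Lemma smooth_x (R : realType) (n d : nat) (X : set 'rV[R]_n) (Y : set 'rV[R]_d)
  (f : 'rV[R]_n -> 'rV[R]_d -> R)
  (gx : 'rV[R]_n -> 'rV[R]_d -> 'rV[R]_n) (gy : 'rV[R]_n -> 'rV[R]_d -> 'rV[R]_d) (Lx : R) :
  C1_with_grads f gx gy -> convex_set X ->
  (forall x x' y y', X x -> X x' -> Y y -> Y y' ->
     enorm (gx x y - gx x' y') <= Lx * (enorm (x - x') + enorm (y - y'))) ->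
  forall x u y, X x -> X u -> Y y ->
  `|f u y - f x y - dotp (gx x y) (u - x)| <= Lx / 2 * enorm (u - x) ^+ 2.
Proof.
move=> [HC _] cX HL x u y Xx Xu Yy.
pose F := fun q : 'rV[R]_n * 'rV[R]_d => f q.1 q.2.
pose p := (x, y) : 'rV[R]_n * 'rV[R]_d.
pose h := (u - x, 0) : 'rV[R]_n * 'rV[R]_d.
have dF : forall q, differentiable F q := fun q => (HC q).1.
have := @descent_abs R (fun s => F (p + s *: h)) (fun s => dotp (gx (x + s *: (u - x)) y) (u - x)) (Lx * enorm (u - x) ^+ 2).
have ps : forall s : R, p + s *: h = (x + s *: (u - x), y).
  move=> s; rewrite /p /h; apply: injective_projections => //=.
  by rewrite scaler0 addr0.
have ->: F (p + 1 *: h) = f u y by rewrite ps scale1r addrC subrK.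
have ->: F (p + 0 *: h) = f x y by rewrite ps scale0r addr0.
rewrite scale0r addr0 => H.
have H1 : forall s : R, derivable (fun s0 : R => F (p + s0 *: h)) s 1 /\
   'D_1 (fun s0 : R => F (p + s0 *: h)) s = dotp (gx (x + s *: (u - x)) y) (u - x).
  move=> s; have [d1 d2] := @phi_deriv R n d F p h dF s.
  split => //; rewrite d2 (HC _).2 ps /=.
  by rewrite (dotpC (gy _ _)) dotp0l addr0.
have H2 : forall s : R, 0 <= s <= 1 -> `|dotp (gx (x + s *: (u - x)) y) (u - x) -
     dotp (gx x y) (u - x)| <= Lx * enorm (u - x) ^+ 2 * s.
  move=> s /andP[s0 s1].
  rewrite -dotpBl; apply: le_trans (CS _ _) _.
  have Xs : X (x + s *: (u - x)) by apply: convex_seg => //; rewrite s0 s1.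
  apply: le_trans (ler_wpM2r (enorm_ge0 _) (HL _ _ _ _ Xs Xx Yy Yy)) _.
  rewrite subrr enorm0 addr0 addrC addKr enormZ ger0_norm //.
  by rewrite expr2 le_eqVlt; apply/orP; left; apply/eqP; ring.
have := H H1 H2; lra.
Qed.

Lemma smooth_y (R : realType) (n d : nat) (X : set 'rV[R]_n) (Y : set 'rV[R]_d)
  (f : 'rV[R]_n -> 'rV[R]_d -> R)
  (gx : 'rV[R]_n -> 'rV[R]_d -> 'rV[R]_n) (gy : 'rV[R]_n -> 'rV[R]_d -> 'rV[R]_d) (Ly : R) :
  C1_with_grads f gx gy -> convex_set Y ->
  (forall x x' y y', X x -> X x' -> Y y -> Y y' ->
     enorm (gy x y - gy x' y') <= Ly * (enorm (x - x') + enorm (y - y'))) ->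
  forall x y w, X x -> Y y -> Y w ->
  `|f x w - f x y - dotp (gy x y) (w - y)| <= Ly / 2 * enorm (w - y) ^+ 2.
Proof.
move=> [HC _] cY HL x y w Xx Yy Yw.
pose F := fun q : 'rV[R]_n * 'rV[R]_d => f q.1 q.2.
pose p := (x, y) : 'rV[R]_n * 'rV[R]_d.
pose h := (0, w - y) : 'rV[R]_n * 'rV[R]_d.
have dF : forall q, differentiable F q := fun q => (HC q).1.
have := @descent_abs R (fun s => F (p + s *: h)) (fun s => dotp (gy x (y + s *: (w - y))) (w - y)) (Ly * enorm (w - y) ^+ 2).
have ps : forall s : R, p + s *: h = (x, y + s *: (w - y)).
  move=> s; rewrite /p /h; apply: injective_projections => //=.
  by rewrite scaler0 addr0.
have ->: F (p + 1 *: h) = f x w by rewrite ps scale1r addrC subrK.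
have ->: F (p + 0 *: h) = f x y by rewrite ps scale0r addr0.
rewrite scale0r addr0 => H.
have H1 : forall s : R, derivable (fun s0 : R => F (p + s0 *: h)) s 1 /\
   'D_1 (fun s0 : R => F (p + s0 *: h)) s = dotp (gy x (y + s *: (w - y))) (w - y).
  move=> s; have [d1 d2] := @phi_deriv R n d F p h dF s.
  split => //; rewrite d2 (HC _).2 ps /=.
  by rewrite (dotpC (gx _ _)) dotp0l add0r.
have H2 : forall s : R, 0 <= s <= 1 -> `|dotp (gy x (y + s *: (w - y))) (w - y) -
     dotp (gy x y) (w - y)| <= Ly * enorm (w - y) ^+ 2 * s.
  move=> s /andP[s0 s1].
  rewrite -dotpBl; apply: le_trans (CS _ _) _.
  have Ys : Y (y + s *: (w - y)) by apply: convex_seg => //; rewrite s0 s1.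
  apply: le_trans (ler_wpM2r (enorm_ge0 _) (HL _ _ _ _ Xx Xx Ys Yy)) _.
  rewrite subrr enorm0 add0r addrC addKr enormZ ger0_norm //.
  by rewrite expr2 le_eqVlt; apply/orP; left; apply/eqP; ring.
have := H H1 H2; lra.
Qed.
Lemma lim0 (R : realType) (A B : R) :
  0 <= B -> (forall l, 0 < l <= 1 -> 0 <= l * A + l ^+ 2 * B) -> 0 <= A.
Proof.
move=> B0 H; rewrite leNgt; apply/negP => A0.
have D0 : 0 < 2 * B - A by lra.
pose l := - A / (2 * B - A).
have l0 : 0 < l by rewrite /l divr_gt0 //; lra.
have l1 : l <= 1 by rewrite /l ler_pdivrMr // mul1r; lra.
have := H l; rewrite l0 l1 => /(_ isT).
have -> : l * A + l ^+ 2 * B = l * (A * (B - A) / (2 * B - A)).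
  rewrite /l; field; lra.
rewrite pmulr_rge0 // => h.
have : A * (B - A) / (2 * B - A) < 0.
  rewrite pmulr_llt0 ?invr_gt0 //; nra.
lra.
Qed.

Lemma enormD2 (R : realType) (n : nat) (a b : 'rV[R]_n) :
  enorm (a + b) ^+ 2 = enorm a ^+ 2 + 2 * dotp a b + enorm b ^+ 2.
Proof. rewrite !enorm_sq dotpDl !dotpDr (dotpC b a); ring. Qed.
Lemma strong_min (R : realType) (n d : nat) (X : set 'rV[R]_n) (Y : set 'rV[R]_d)
  (f : 'rV[R]_n -> 'rV[R]_d -> R)
  (gx : 'rV[R]_n -> 'rV[R]_d -> 'rV[R]_n) (gy : 'rV[R]_n -> 'rV[R]_d -> 'rV[R]_d) (Lx r1 r2 : R) :
  C1_with_grads f gx gy -> convex_set X -> 0 <= Lx -> 0 <= r1 ->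
  (forall x x' y y', X x -> X x' -> Y y -> Y y' ->
     enorm (gx x y - gx x' y') <= Lx * (enorm (x - x') + enorm (y - y'))) ->
  forall xs y z v, X xs -> Y y ->
  (forall x, X x -> Ffun f r1 r2 xs y z v <= Ffun f r1 r2 x y z v) ->
  forall u, X u ->
  (r1 - Lx) / 2 * enorm (u - xs) ^+ 2 <= Ffun f r1 r2 u y z v - Ffun f r1 r2 xs y z v.
Proof.
move=> HC cX Lx0 r10 HL xs y z v Xxs Yy Hmin u Xu.
set h := u - xs.
have Hsm := @smooth_x R n d X Y f gx gy Lx HC cX HL.
set A := dotp (gx xs y) h + r1 * dotp (xs - z) h.
have A0 : 0 <= A.
  apply: (@lim0 R A ((Lx + r1) / 2 * enorm h ^+ 2)).
    by apply: mulr_ge0; [lra | exact: sqr_ge0].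
  move=> l /andP[l0 l1].
  have Xl : X (xs + l *: h) by apply: convex_seg => //; rewrite (ltW l0) l1.
  have := Hmin _ Xl; rewrite /Ffun.
  have := Hsm xs (xs + l *: h) y Xxs Xl Yy.
  have -> : xs + l *: h - xs = l *: h by rewrite addrAC subrr add0r.
  rewrite ler_norml => /andP[_].
  have -> : xs + l *: h - z = (xs - z) + l *: h by rewrite addrAC.
  rewrite (@enormD2 _ _ (xs - z)) !dotpZr enormZ ger0_norm ?(ltW l0) //.
  rewrite /A; set a := dotp (gx xs y) h; set b := dotp (xs - z) h.
  set e := enorm h; set E := enorm (xs - z).
  move=> h1 h2.
  nra.
have := Hsm xs u y Xxs Xu Yy; rewrite -/h ler_norml => /andP[h1 _].
rewrite /Ffun.
have -> : u - z = (xs - z) + h by rewrite /h addrAC addrCA subrr addr0.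
rewrite (@enormD2 _ _ (xs - z)); move: A0; rewrite /A -/h => A0.
lra.
Qed.
Lemma enormZ2 (R : realType) (n : nat) (k : R) (u : 'rV[R]_n) :
  enorm (k *: u) ^+ 2 = k ^+ 2 * enorm u ^+ 2.
Proof. by rewrite !enorm_sq dotpZl dotpZr mulrA -expr2. Qed.

Lemma zident (R : realType) (n : nat) (b z z' : 'rV[R]_n) :
  enorm (b - z') ^+ 2 - enorm (b - z) ^+ 2 = dotp (z' + z - 2%:R *: b) (z' - z).
Proof.
rewrite !enorm_sq !dotpBl !dotpBr !dotpDl !dotpZl.
rewrite (dotpC z' b) (dotpC z b) (dotpC z' z); ring.
Qed.

Theorem lemma6 (R : realType) (n d : nat)
  (X : set 'rV[R]_n) (Y : set 'rV[R]_d)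
  (f : 'rV[R]_n -> 'rV[R]_d -> R)
  (gx : 'rV[R]_n -> 'rV[R]_d -> 'rV[R]_n) (gy : 'rV[R]_n -> 'rV[R]_d -> 'rV[R]_d)
  (Lx Ly r1 r2 c alpha beta mu : R)
  (xstar : 'rV[R]_d -> 'rV[R]_n -> 'rV[R]_d -> 'rV[R]_n)
  (xs : nat -> 'rV[R]_n) (ys : nat -> 'rV[R]_d)
  (zs : nat -> 'rV[R]_n) (vs : nat -> 'rV[R]_d) :
  X !=set0 -> convex_set X -> compact X ->
  Y !=set0 -> convex_set Y -> compact Y ->
  C1_with_grads f gx gy ->
  0 < Lx -> 0 < Ly ->
  (forall x x' y y', X x -> X x' -> Y y -> Y y' ->
     enorm (gx x y - gx x' y') <= Lx * (enorm (x - x') + enorm (y - y'))) ->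
  (forall x x' y y', X x -> X x' -> Y y -> Y y' ->
     enorm (gy x y - gy x' y') <= Ly * (enorm (x - x') + enorm (y - y'))) ->
  Lx < r1 -> Ly < r2 ->
  (* x(y,z,v) is the (unique) minimizer of F(., y, z, v) over X *)
  (forall y z v, X (xstar y z v) /\
     forall x, X x -> Ffun f r1 r2 (xstar y z v) y z v <= Ffun f r1 r2 x y z v) ->
  0 < c -> 0 < alpha -> 0 < beta < 1 -> 0 < mu < 1 ->
  X (xs 0%N) -> Y (ys 0%N) ->
  (forall t, is_proj X (xs t - c *: gradxF gx r1 (xs t) (ys t) (zs t) (vs t)) (xs t.+1)) ->
  (forall t, is_proj Y (ys t + alpha *: gradyF gy r2 (xs t.+1) (ys t) (zs t) (vs t)) (ys t.+1)) ->
  (forall t, zs t.+1 = zs t + beta *: (xs t.+1 - zs t)) ->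
  (forall t, vs t.+1 = vs t + mu *: (ys t.+1 - vs t)) ->
  let dfun := fun y z v => Ffun f r1 r2 (xstar y z v) y z v in
  let sigma1 := (Ly + r1 - Lx) / (r1 - Lx) in
  let Ld := Ly * sigma1 + Ly + r2 in
  forall t : nat,
    dfun (ys t.+1) (zs t.+1) (vs t.+1) >=
      dfun (ys t) (zs t) (vs t)
      + (2 - mu) * r2 / (2 * mu) * enorm (vs t.+1 - vs t) ^+ 2
      + r1 / 2 * dotp (zs t.+1 + zs t - 2%:R *: xstar (ys t.+1) (zs t.+1) (vs t)) (zs t.+1 - zs t)
      + dotp (gradyF gy r2 (xstar (ys t) (zs t) (vs t)) (ys t) (zs t) (vs t)) (ys t.+1 - ys t)
      - Ld / 2 * enorm (ys t.+1 - ys t) ^+ 2.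
Proof.
move=> _ cX _ _ cY _ HC Lx0 Ly0 HLx HLy r1Lx r2Ly Hmin c0 a0 /andP[b0 b1] /andP[m0 m1]
  X0 Y0 Hpx Hpy Hz Hv dfun sigma1 Ld t.
have Yt : Y (ys t) by case: t => [|k] //; have [] := Hpy k.
have Yt1 : Y (ys t.+1) by have [] := Hpy t.
set y := ys t; set y' := ys t.+1; set z := zs t; set z' := zs t.+1.
set v := vs t; set v' := vs t.+1.
have P1 : dfun y' z' v' - dfun y' z' v >=
    r2 / 2 * (enorm (y' - v) ^+ 2 - enorm (y' - v') ^+ 2).
  have [Xa _] := Hmin y' z' v'.
  have [_ mb] := Hmin y' z' v.
  have := mb _ Xa; rewrite /dfun /Ffun; lra.
have P2 : dfun y' z' v - dfun y' z v >=
    r1 / 2 * dotp (z' + z - 2%:R *: xstar y' z' v) (z' - z).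
  have [Xb _] := Hmin y' z' v.
  have [_ mb] := Hmin y' z v.
  have := mb _ Xb; rewrite /dfun /Ffun -zident; lra.
have P3 : dfun y' z v - dfun y z v >=
    dotp (gradyF gy r2 (xstar y z v) y z v) (y' - y) - Ld / 2 * enorm (y' - y) ^+ 2.
  have [Xx mx] := Hmin y z v.
  have [Xx' _] := Hmin y' z v.
  rewrite /dfun.
  set x := xstar y z v; set x' := xstar y' z v.
  have r10 : 0 <= r1 by lra.
  have S1 := @strong_min R n d X Y f gx gy Lx r1 r2 HC cX (ltW Lx0) r10 HLx x y z v Xx Yt mx x' Xx'.
  have S2 := @smooth_y R n d X Y f gx gy Ly HC cY HLy x' y y' Xx' Yt Yt1.
  have S3 : - (Ly * enorm (x' - x) * enorm (y' - y)) <= dotp (gy x' y - gy x y) (y' - y).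
    apply: le_trans (dotp_ge _ _).
    rewrite lerN2.
    apply: ler_wpM2r; first exact: enorm_ge0.
    by have := HLy x' x y y Xx' Xx Yt Yt; rewrite subrr enorm0 addr0.
  have Ey : y' - v = (y - v) + (y' - y) by rewrite [RHS]addrC [RHS]addrA subrK.
  have KEY : Ly * enorm (x' - x) * enorm (y' - y) <=
      (r1 - Lx) / 2 * enorm (x' - x) ^+ 2 + (Ly * sigma1) / 2 * enorm (y' - y) ^+ 2.
    set a := enorm (x' - x); set b := enorm (y' - y).
    have aa0 : 0 <= a by exact: enorm_ge0.
    have bb0 : 0 <= b by exact: enorm_ge0.
    have rl : 0 < r1 - Lx by lra.
    have sg : Ly / (r1 - Lx) <= sigma1.
      rewrite /sigma1 ler_pM2r ?invr_gt0 //; lra.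
    have h1 : Ly * (Ly / (r1 - Lx)) * b ^+ 2 <= Ly * sigma1 * b ^+ 2.
      by apply: ler_wpM2r; [exact: sqr_ge0 | apply: ler_wpM2l => //; lra].
    have h2 : 2 * (Ly * a * b) <= (r1 - Lx) * a ^+ 2 + Ly * (Ly / (r1 - Lx)) * b ^+ 2.
      rewrite -(ler_pM2l rl).
      have -> : (r1 - Lx) * ((r1 - Lx) * a ^+ 2 + Ly * (Ly / (r1 - Lx)) * b ^+ 2)
          = ((r1 - Lx) * a) ^+ 2 + (Ly * b) ^+ 2 by field; lra.
      have := sqr_ge0 ((r1 - Lx) * a - Ly * b).
      move=> h; nra.
    lra.
  move: S1 S2 S3 KEY; rewrite /Ffun /gradyF Ey (@enormD2 _ _ (y - v)) ler_norml !dotpBl ?dotpZl /Ld.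
  move=> S1 /andP[S2 _] S3 KEY.
  rewrite !dotpBl; lra.
have Ev : v' - v = mu *: (y' - v) by rewrite /v' Hv addrAC subrr add0r.
have E1 : y' - v = mu^-1 *: (v' - v).
  by rewrite Ev scalerA mulVf ?scale1r //; lra.
have E2 : y' - v' = (mu^-1 - 1) *: (v' - v).
  rewrite scalerBl scale1r -E1.
  by rewrite opprB addrA subrK.
have I1 : r2 / 2 * (enorm (y' - v) ^+ 2 - enorm (y' - v') ^+ 2)
    = (2 - mu) * r2 / (2 * mu) * enorm (v' - v) ^+ 2.
  rewrite E1 E2 !enormZ2; field; lra.
rewrite I1 in P1.
clearbody dfun; lra.
Qed.
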